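(* Let $X\subset\mathbb{R}^d$ be a complementary regular set, $f:\mathbb{R}^d\to\mathbb{R}$ a $C^2$ function, and $c$ a regular value of $f_{|X}$. Let $\eta:\mathbb{R}^d\to\mathbb{R}^d$ be smooth with $\sup_x\|\eta(x)\|\le1$, and $f_r(x)=f(x+r\eta(x))$. Then, in the Hausdorff distance, $\lim_{r\to0^+}\big(X^{-r}\cap f_r^{-1}(-\infty,c]\big)=X\cap f^{-1}(-\infty,c]$.
   Context: $d_A(x)=\inf_{a\in A}\|x-a\|$; $\mathcal{C}A:=\overline{\mathbb{R}^d\setminus A}$; $X^{-r}=\{x:d_{\mathcal{C}X}(x)\ge r\}$. Clarke gradient $\partial\phi(x)$: convex hull of limits $\lim_i\nabla\phi(x_i)$, $x_i\to x$, $\phi$ differentiable at $x_i$; $\Delta(B)=\inf_{b\in B}\|b\|$. Reach of closed $A$: supremum of $t\ge0$ such that every $x$ with $d_A(x)<t$ has a unique nearest point in $A$; $\operatorname{reach}_\mu(A)=\sup\{s:\Delta(\partial d_A(x))\ge\mu\text{ for all }x\text{ with }0<d_A(x)\le s\}$. Complementary regular: compact $X$ with $\overline{\operatorname{int}X}=X$, $\operatorname{reach}_\mu(X)>0$ for some $\mu\in(0,1]$, $\operatorname{reach}(\mathcal{C}X)>0$. Tangent cone $\operatorname{Tan}(A,x)$: cone generated by limits of $(x_n-x)/\|x_n-x\|$, $x_n\in A\setminus\{x\}$, $x_n\to x$; polar $B^\circ=\{u:\langle u,b\rangle\le0\ \forall b\in B\}$; $\operatorname{Nor}(A,x)=\operatorname{Tan}(A,x)^\circ$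 for $A$ of positive reach; $\operatorname{Nor}(X,x):=-\operatorname{Nor}(\mathcal{C}X,x)$ for $x\in\partial X$, $\{0\}$ for interior $x$. $x\in X$ is critical for $f_{|X}$ if $\nabla f(x)\in-\operatorname{Nor}(X,x)$; $c$ is regular if $X\cap f^{-1}(c)$ contains no critical point. *)

(* Defs.v *)
(* Points of R^d are row vectors 'rV[R]_d;
   the Euclidean norm and inner product are defined explicitly below
   (the library's default norm on 'rV is the max norm; it induces the
   same topology, so library notions closure/interior/compact/continuous
   and sequence convergence are the usual Euclidean ones). *)
From HB Require Import structures.
From mathcomp Require Import all_boot all_order all_algebra.
From mathcomp Require Import all_classical all_reals all_analysis.
Set Implicit Arguments. Unset Strict Implicit. Unset Printing Implicit Defensive.
Import Order.TTheory GRing.Theory Num.Theory.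
Import numFieldNormedType.Exports.
Local Open Scope classical_set_scope.
Local Open Scope ring_scope.

Section Defs.
Context {R : realType} {d : nat}.
Local Notation V := 'rV[R]_d.

Definition evec (i : 'I_d) : V := delta_mx 0 i.
Definition dotp (u v : V) : R := \sum_i u 0 i * v 0 i.
Definition enorm (u : V) : R := Num.sqrt (dotp u u).

Definition distA (A : set V) (x : V) : R := inf [set enorm (x - a) | a in A].
Definition Ccl (A : set V) : set V := closure (~` A).
Definition inner_parallel (X : set V) (r : R) : set V :=
  [set x | r <= distA (Ccl X) x].

Definition grad (phi : V -> R) (x : V) : V := \row_i ('D_(evec i) phi x).

Definition grad_limits (phi : V -> R) (x : V) : set V :=
  [set g | exists xs : nat -> V,
     xs @ \oo --> x /\ (forall n, differentiable phi (xs n)) /\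
     (fun n => grad phi (xs n)) @ \oo --> g].

Definition conv_hull (B : set V) : set V :=
  [set y | exists n (w : 'I_n -> R) (p : 'I_n -> V),
     (forall i, 0 <= w i) /\ \sum_i w i = 1 /\ (forall i, B (p i)) /\
     y = \sum_i w i *: p i].

Definition clarke (phi : V -> R) (x : V) : set V := conv_hull (grad_limits phi x).

Definition Delta (B : set V) : R := inf [set enorm b | b in B].

Definition reach_mu (A : set V) (mu : R) : \bar R :=
  ereal_sup [set s%:E | s in [set s : R | forall x,
     0 < distA A x <= s -> mu <= Delta (clarke (distA A) x)]].

Definition unique_nearest (A : set V) (x : V) : Prop :=
  exists! a, A a /\ enorm (x - a) = distA A x.

Definition reach (A : set V) : \bar R :=
  ereal_sup [set t%:E | t in [set t : R | 0 <= t /\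
     forall x, distA A x < t -> unique_nearest A x]].

Definition complementary_regular (X : set V) : Prop :=
  [/\ compact X, closure (interior X) = X,
      (exists mu : R, 0 < mu <= 1 /\ (0 < reach_mu X mu)%E)
    & (0 < reach (Ccl X))%E].

Definition tan_dirs (A : set V) (x : V) : set V :=
  [set u | exists xs : nat -> V,
     (forall n, A (xs n) /\ xs n != x) /\ xs @ \oo --> x /\
     (fun n => (enorm (xs n - x))^-1 *: (xs n - x)) @ \oo --> u].

Definition Tan (A : set V) (x : V) : set V :=
  [set v | v = 0 \/ exists l u, 0 <= l /\ tan_dirs A x u /\ v = l *: u].

Definition polar (B : set V) : set V :=
  [set u | forall b, B b -> dotp u b <= 0].

Definition Nor (A : set V) (x : V) : set V := polar (Tan A x).

Definition NorX (X : set V) (x : V) : set V :=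
  if `[< interior X x >] then [set 0] else [set - u | u in Nor (Ccl X) x].

Definition critical (X : set V) (f : V -> R) (x : V) : Prop :=
  X x /\ [set - u | u in NorX X x] (grad f x).

Definition regular_value (X : set V) (f : V -> R) (c : R) : Prop :=
  forall x, X x -> f x = c -> ~ critical X f x.

Fixpoint Ck (W : normedModType R) (k : nat) (g : V -> W) {struct k} : Prop :=
  continuous g /\
  match k with
  | 0 => True
  | k'.+1 => forall i, (forall x, derivable g x (evec i)) /\
                        Ck k' (fun x => 'D_(evec i) g x)
  end.

Definition smooth (W : normedModType R) (g : V -> W) : Prop := forall k, Ck k g.

Definition enlarge (A : set V) (e : R) : set V :=
  [set y | exists2 a, A a & enorm (y - a) <= e].

Definition hausdorff (A B : set V) : \bar R :=
  ereal_inf [set e%:E | e in [set e : R | 0 <= e /\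
     A `<=` enlarge B e /\ B `<=` enlarge A e]].

End Defs.

(* Main.v *)
Require Import Defs.
From HB Require Import structures.
From mathcomp Require Import all_boot all_order all_algebra.
From mathcomp Require Import all_classical all_reals all_analysis.
From mathcomp Require Import ring lra.
Set Implicit Arguments. Unset Strict Implicit. Unset Printing Implicit Defensive.
Import Order.TTheory GRing.Theory Num.Theory.
Import numFieldNormedType.Exports.
Local Open Scope classical_set_scope.
Local Open Scope ring_scope.

Section Euclid.
Context {R : realType} {d : nat}.
Local Notation V := 'rV[R]_d.
Implicit Types u v w : V.

Lemma dotpC u v : dotp u v = dotp v u.
Proof. by apply: eq_bigr => i _; rewrite mulrC. Qed.

Lemma dotpDl u v w : dotp (u + v) w = dotp u w + dotp v w.
Proof. by rewrite /dotp -big_split; apply: eq_bigr => i _; rewrite mxE mulrDl. Qed.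

Lemma dotpDr u v w : dotp w (u + v) = dotp w u + dotp w v.
Proof. by rewrite dotpC dotpDl !(dotpC w). Qed.

Lemma dotpZl a u v : dotp (a *: u) v = a * dotp u v.
Proof. by rewrite /dotp mulr_sumr; apply: eq_bigr => i _; rewrite mxE mulrA. Qed.

Lemma dotpZr a u v : dotp u (a *: v) = a * dotp u v.
Proof. by rewrite dotpC dotpZl dotpC. Qed.

Lemma dotpNl u v : dotp (- u) v = - dotp u v.
Proof. by rewrite -scaleN1r dotpZl mulN1r. Qed.

Lemma dotpNr u v : dotp u (- v) = - dotp u v.
Proof. by rewrite dotpC dotpNl dotpC. Qed.

Lemma dotpBl u v w : dotp (u - v) w = dotp u w - dotp v w.
Proof. by rewrite dotpDl dotpNl. Qed.

Lemma dotpBr u v w : dotp w (u - v) = dotp w u - dotp w v.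
Proof. by rewrite dotpDr dotpNr. Qed.

Lemma dotp0l v : dotp 0 v = 0.
Proof. by rewrite /dotp big1 // => i _; rewrite mxE mul0r. Qed.

Lemma dotp0r v : dotp v 0 = 0.
Proof. by rewrite dotpC dotp0l. Qed.

Lemma dotpp_ge0 u : 0 <= dotp u u.
Proof. by rewrite /dotp sumr_ge0 // => i _; rewrite -expr2 sqr_ge0. Qed.

Lemma dotpp_eq0 u : dotp u u = 0 -> u = 0.
Proof.
move=> /eqP; rewrite /dotp psumr_eq0; last by move=> i _; rewrite -expr2 sqr_ge0.
move=> /allP H; apply/rowP => i; rewrite mxE.
have := H i (mem_index_enum i); rewrite -expr2 sqrf_eq0 => /eqP ->.
by [].
Qed.

Lemma enorm_ge0 u : 0 <= enorm u.
Proof. exact: sqrtr_ge0. Qed.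

Lemma enorm_sq u : enorm u ^+ 2 = dotp u u.
Proof. by rewrite /enorm sqr_sqrtr // dotpp_ge0. Qed.

Lemma enorm_eq0 u : enorm u = 0 -> u = 0.
Proof. by move=> H; apply: dotpp_eq0; rewrite -enorm_sq H expr0n. Qed.

Lemma enorm0 : enorm (0 : V) = 0.
Proof. by rewrite /enorm dotp0l sqrtr0. Qed.

Lemma enormZ a u : enorm (a *: u) = `|a| * enorm u.
Proof.
rewrite /enorm dotpZl dotpZr mulrA -expr2 sqrtrM ?sqr_ge0 //.
by rewrite sqrtr_sqr.
Qed.

Lemma enormN u : enorm (- u) = enorm u.
Proof. by rewrite -scaleN1r enormZ normrN1 mul1r. Qed.

Lemma enormB u v : enorm (u - v) = enorm (v - u).
Proof. by rewrite -enormN opprB. Qed.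

Lemma enorm_le_sq u v : (enorm u <= enorm v) = (dotp u u <= dotp v v).
Proof. by rewrite /enorm ler_sqrt // dotpp_ge0. Qed.

Lemma enorm_le_sq' u a : 0 <= a -> (enorm u <= a) = (dotp u u <= a ^+ 2).
Proof.
move=> a0; rewrite -enorm_sq; apply/idP/idP => H.
  by rewrite ler_pXn2r // ?nnegrE ?enorm_ge0.
by rewrite -(ler_pXn2r (n:=2)) // nnegrE enorm_ge0.
Qed.

Lemma ge_enorm_sq u a : 0 <= a -> (a <= enorm u) = (a ^+ 2 <= dotp u u).
Proof.
move=> a0; rewrite -enorm_sq; apply/idP/idP => H.
  by rewrite ler_pXn2r // ?nnegrE ?enorm_ge0.
by rewrite -(ler_pXn2r (n:=2)) // nnegrE enorm_ge0.
Qed.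

Lemma dotp_expand u v : dotp (u + v) (u + v) = dotp u u + 2 * dotp u v + dotp v v.
Proof. rewrite dotpDl !dotpDr (dotpC v u); ring. Qed.

Lemma dotp_expandB u v : dotp (u - v) (u - v) = dotp u u - 2 * dotp u v + dotp v v.
Proof. rewrite dotp_expand dotpNr dotpNl dotpNr opprK; ring. Qed.

Lemma CS_sq u v : dotp u v ^+ 2 <= dotp u u * dotp v v.
Proof.
have [v0|vn0] := eqVneq (dotp v v) 0.
  by rewrite (dotpp_eq0 v0) dotp0r dotp0l expr0n mulr0.
have vp : 0 < dotp v v by rewrite lt_neqAle eq_sym vn0 dotpp_ge0.
set t := dotp u v / dotp v v.
have := dotpp_ge0 (u - t *: v).
rewrite dotp_expandB dotpZr dotpZl dotpZr /t => H.
have e : dotp u u - 2 * (dotp u v / dotp v v * dotp u v) +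
   dotp u v / dotp v v * (dotp u v / dotp v v * dotp v v)
   = dotp u u - dotp u v ^+ 2 / dotp v v by field; rewrite vn0.
by rewrite e subr_ge0 ler_pdivrMr // in H.
Qed.

Lemma CS u v : dotp u v <= enorm u * enorm v.
Proof.
have [le0|gt0] := leP (dotp u v) 0.
  by apply: le_trans le0 _; rewrite mulr_ge0 // enorm_ge0.
rewrite -(ler_pXn2r (n:=2)) ?nnegrE ?mulr_ge0 ?enorm_ge0 ?(ltW gt0) //.
rewrite exprMn !enorm_sq; exact: CS_sq.
Qed.

Lemma CS_abs u v : `|dotp u v| <= enorm u * enorm v.
Proof.
have [le0|gt0] := leP (dotp u v) 0.
  by rewrite ler0_norm // -dotpNl; apply: le_trans (CS _ _) _; rewrite enormN.
by rewrite gtr0_norm // CS.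
Qed.

Lemma enormD u v : enorm (u + v) <= enorm u + enorm v.
Proof.
rewrite enorm_le_sq' ?addr_ge0 ?enorm_ge0 // dotp_expand.
have := CS u v; rewrite -!enorm_sq => H.
rewrite sqrrD; lra.
Qed.


Lemma enorm_tri u v w : enorm (u - w) <= enorm (u - v) + enorm (v - w).
Proof. by apply: le_trans (enormD _ _); rewrite addrA subrK. Qed.

Lemma enormDB u v : enorm u - enorm v <= enorm (u - v).
Proof. by have := enormD (u - v) v; rewrite subrK lerBlDr. Qed.

Lemma coord_le_enorm u i : `|u 0 i| <= enorm u.
Proof.
rewrite -sqrtr_sqr /enorm ler_wsqrtr // /dotp (bigD1 i) //= -expr2.
by rewrite lerDl sumr_ge0 // => j _; rewrite -expr2 sqr_ge0.
Qed.

Lemma mxnorm_le_enorm u : `|u| <= enorm u.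
Proof.
rewrite (_ : `|u| = mx_norm u) // mx_normrE; apply: bigmax_le; first exact: enorm_ge0.
by move=> [i j] _ /=; rewrite (ord1 i); exact: coord_le_enorm.
Qed.

Lemma coord_le_mxnorm u i : `|u 0 i| <= `|u|.
Proof.
rewrite (_ : `|u| = mx_norm u) // mx_normrE.
exact: (le_bigmax _ _ (ord0, i)).
Qed.

Lemma enorm_le_mxnorm u : enorm u <= d%:R * `|u|.
Proof.
rewrite enorm_le_sq' ?mulr_ge0 ?ler0n ?normr_ge0 //.
apply: (@le_trans _ _ (\sum_(i < d) `|u|^+2)).
  rewrite /dotp; apply: ler_sum => i _; rewrite -expr2 -real_normK ?num_real //.
  by rewrite ler_pXn2r ?nnegrE ?normr_ge0 // coord_le_mxnorm.
rewrite sumr_const card_ord exprMn mulrC -[_ *+ d]mulr_natr.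
have H : (d%:R : R) <= d%:R ^+ 2.
  case: d => [|n]; first by rewrite expr0n.
  by rewrite expr2 ler_peMl ?ler0n // ler1n.
by apply: ler_wpM2l => //; exact: sqr_ge0.
Qed.

End Euclid.

Section Topo.
Context {R : realType} {d : nat}.
Local Notation V := 'rV[R]_d.
Implicit Types u v w x y : V.

Lemma nbhs_enorm x e : 0 < e -> nbhs x [set y | enorm (y - x) < e].
Proof.
move=> e0; apply/nbhs_ballP; exists (e / (d%:R + 1)).
  by rewrite /= divr_gt0 // ltr_wpDl.
move=> y; rewrite mx_norm_ball /ball_ /= => H; apply: le_lt_trans (enorm_le_mxnorm _) _.
rewrite -normrN opprB.
have d1 : 0 < (d%:R : R) + 1 by rewrite ltr_wpDl.
apply: (@le_lt_trans _ _ ((d%:R + 1) * `|x - y|)).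
  by rewrite ler_wpM2r ?normr_ge0 // lerDl.
by rewrite mulrC -ltr_pdivlMr.
Qed.


Lemma lip_continuous (g : V -> R) :
  (forall x y, g x - g y <= enorm (x - y)) -> continuous g.
Proof.
move=> H x; apply/(@cvgrPdist_lt _ _ _ (nbhs x) (nbhs_filter x)) => e e0.
apply: filterS (nbhs_enorm x e0) => y /= Hy.
have h1 := H x y; have h2 := H y x; rewrite enormB in h2.
rewrite enormB in Hy; rewrite ltr_norml; apply/andP; split; lra.
Qed.

Lemma enorm_sub_continuous x : continuous (fun y => enorm (y - x)).
Proof.
apply: lip_continuous => y z.
have := enorm_tri (y - x) (z - x) 0.
rewrite !subr0 (_ : y - x - (z - x) = y - z); first lra.
by rewrite opprB addrA subrK.
Qed.

Lemma distA_set0 x : distA set0 x = 0.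
Proof. by rewrite /distA image_set0 inf0. Qed.

Lemma distA_lb (A : set V) x m : A !=set0 ->
  (forall a, A a -> m <= enorm (x - a)) -> m <= distA A x.
Proof.
move=> [a0 Aa0] H; apply: lb_le_inf; first by exists (enorm (x - a0)), a0.
by move=> _ [a Aa <-]; exact: H.
Qed.

Lemma distA_ge0 (A : set V) x : 0 <= distA A x.
Proof.
have [->|/set0P An0] := eqVneq A set0; first by rewrite distA_set0.
by apply: distA_lb => // a _; exact: enorm_ge0.
Qed.

Lemma distA_le (A : set V) x a : A a -> distA A x <= enorm (x - a).
Proof.
move=> Aa; apply: ge_inf; last by exists a.
by exists 0 => _ [b _ <-]; exact: enorm_ge0.
Qed.

Lemma distA_lip (A : set V) x y : distA A x <= distA A y + enorm (x - y).
Proof.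
have [->|/set0P An0] := eqVneq A set0.
  by rewrite !distA_set0 add0r enorm_ge0.
rewrite -lerBlDr; apply: distA_lb => // a Aa.
rewrite lerBlDr; apply: le_trans (distA_le _ Aa) _.
by rewrite [leRHS]addrC; exact: enorm_tri.
Qed.

Lemma distA_continuous (A : set V) : continuous (distA A).
Proof.
by apply: lip_continuous => x y; have := distA_lip A x y; lra.
Qed.

End Topo.

Section Topo2.
Context {R : realType} {d : nat}.
Local Notation V := 'rV[R]_d.
Implicit Types u v w x y : V.

Lemma notint_Ccl (X : set V) b : ~ interior X b -> Ccl X b.
Proof.
move=> nint B Bb; apply/set0P/negP => /eqP H; apply: nint.
rewrite /interior /=; apply: filterS Bb => z Bz.
apply/not_notP => nXz.
have : (~` X `&` B) z by [].
by rewrite H.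
Qed.

Lemma interior_far (X : set V) y : interior X y ->
  exists2 e, 0 < e & forall a, Ccl X a -> e <= enorm (y - a).
Proof.
move=> /nbhs_ballP [e e0 He]; exists e => // a Ca.
rewrite leNgt; apply/negP => Ha.
have Hb : ball y e a.
  rewrite mx_norm_ball /ball_ /=; exact: le_lt_trans (mxnorm_le_enorm _) Ha.
have /Ca [z [nXz Bz]] : nbhs a (ball y e).
  by apply: open_nbhs_nbhs; split => //; exact: ball_open.
by apply: nXz; apply: He.
Qed.

Lemma interior_distA (X : set V) y : Ccl X !=set0 -> interior X y ->
  0 < distA (Ccl X) y.
Proof.
move=> Cn0 /interior_far [e e0 He]; apply: lt_le_trans e0 _.
exact: distA_lb.
Qed.

Lemma dense_interior (X : set V) b N : closure (interior X) = X -> X b ->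
  nbhs b N -> exists y, interior X y /\ N y.
Proof.
move=> cl Xb Nb; rewrite -cl in Xb; have [y [Iy Ny]] := Xb _ Nb.
by exists y.
Qed.

End Topo2.

Section Descent.
Context {R : realType} {d : nat}.
Local Notation V := 'rV[R]_d.
Implicit Types u v w x y : V.

Lemma nbhs_enorm_ex x (N : set V) : nbhs x N ->
  exists2 e, 0 < e & forall y, enorm (y - x) < e -> N y.
Proof.
move=> /nbhs_ballP [e e0 He]; exists e => // y Hy; apply: He.
rewrite mx_norm_ball /ball_ /= -normrN opprB.
exact: le_lt_trans (mxnorm_le_enorm _) Hy.
Qed.

Lemma evecE (i j : 'I_d) : evec i 0 j = (j == i)%:R :> R.
Proof. by rewrite /evec mxE eqxx. Qed.

Lemma dotp_evec u (i : 'I_d) : dotp u (evec i) = u 0 i.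
Proof.
rewrite /dotp (bigD1 i) //= evecE eqxx mulr1 big1 ?addr0 // => j /negbTE ji.
by rewrite evecE ji mulr0.
Qed.

Lemma enorm_evec (i : 'I_d) : enorm (evec i : V) = 1.
Proof. by rewrite /enorm dotp_evec evecE eqxx sqrtr1. Qed.

Lemma enorm_Zevec a (i : 'I_d) : enorm (a *: evec i : V) = `|a|.
Proof. by rewrite enormZ enorm_evec mulr1. Qed.

Definition wv v (k : nat) : V := \row_j (if (j < k)%N then v 0 j else 0).

Lemma wv0 v : wv v 0 = 0.
Proof. by apply/rowP => j; rewrite !mxE. Qed.

Lemma wvd v : wv v d = v.
Proof. by apply/rowP => j; rewrite !mxE ltn_ord. Qed.

Lemma wvS v (k : 'I_d) : wv v k.+1 = wv v k + v 0 k *: evec k.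
Proof.
apply/rowP => j; rewrite !mxE eqxx /= ltnS leq_eqVlt.
have [->|jk] := eqVneq j k; first by rewrite eqxx ltnn add0r mulr1.
have -> : (nat_of_ord j == nat_of_ord k) = false.
  by apply/negbTE; apply: contra jk => /eqP /val_inj ->.
by rewrite /= mulr0 addr0.
Qed.

Lemma enorm_wv v k : enorm (wv v k) <= enorm v.
Proof.
rewrite enorm_le_sq; apply: ler_sum => j _; rewrite !mxE.
by case: ifP => _ //; rewrite mul0r -expr2 sqr_ge0.
Qed.

Lemma partial_is_derive (f : V -> R) (Q : V) (i : 'I_d) (s : R) :
  derivable f (Q + s *: evec i) (evec i) ->
  is_derive s 1 (fun t => f (Q + t *: evec i)) ('D_(evec i) f (Q + s *: evec i)).
Proof.
move=> H.
have E : (fun h : R => h^-1 *: (((fun t => f (Q + t *: evec i)) \o shift s) (h *: 1)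
     - f (Q + s *: evec i))) =
  (fun h : R => h^-1 *: ((f \o shift (Q + s *: evec i)) (h *: evec i) - f (Q + s *: evec i))).
  apply/funext => h /=; congr (_ *: (f _ - _)).
  rewrite /shift [_%:A]mulr1.
  by rewrite scalerDl addrCA.
split; first by rewrite /derivable E.
by rewrite /derive E.
Qed.

Lemma continuous_comp_aff (f : V -> R) : continuous f ->
  forall Q e, continuous (fun s : R => f (Q + s *: e)).
Proof.
move=> fc Q e s.
apply: (@continuous_comp _ _ _ (fun s : R => Q + s *: e) f); last exact: fc.
apply: continuousD; first exact: cst_continuous.
exact: scalel_continuous.
Qed.

Lemma MVT_any (phi dphi : R -> R) (s : R) :
  (forall t : R, is_derive t 1 phi (dphi t)) -> continuous phi ->
  exists2 c, `|c| <= `|s| & phi s - phi 0 = dphi c * s.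
Proof.
move=> Hd Hc.
case: (leP 0 s) => s0.
  have [c] := MVT_segment s0 (fun t _ => Hd t) (continuous_subspaceT Hc).
  rewrite in_itv /= => /andP [c0 cs] E; exists c; last by rewrite E subr0.
  by rewrite !ger0_norm // (le_trans c0 cs).
have [c] := MVT_segment (ltW s0) (fun t _ => Hd t) (continuous_subspaceT Hc).
rewrite in_itv /= => /andP [c0 cs] E; exists c.
  by rewrite ler0_norm // (ltr0_norm s0) lerN2.
by apply/eqP; rewrite -opprB E sub0r mulrN opprK.
Qed.

Lemma descent (f : V -> R) b v :
  continuous f -> (forall i x, derivable f x (evec i)) ->
  (forall i, continuous ('D_(evec i) f)) ->
  dotp (grad f b) v < 0 ->
  exists2 t0, 0 < t0 & forall t, 0 < t -> t < t0 -> f (b + t *: v) < f b.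
Proof.
move=> fc fd Dc gv0.
set G := grad f b; set gv := dotp G v; set nv := enorm v.
have nv0 : 0 <= nv by exact: enorm_ge0.
have den0 : 0 < 2 * ((d%:R : R) * nv + 1).
  by rewrite mulr_gt0 // ltr_wpDl // mulr_ge0.
set th := - gv / (2 * (d%:R * nv + 1)).
have th0 : 0 < th by rewrite divr_gt0 // oppr_gt0.
have Hn : \forall x \near b, forall i : 'I_d,
    `|'D_(evec i) f b - 'D_(evec i) f x| < th.
  apply: (@filter_forall _ 'I_d (fun i x => `|'D_(evec i) f b - 'D_(evec i) f x| < th)
    (nbhs b) (nbhs_filter b)) => i.
  exact: (@cvgrPdist_lt _ _ _ (nbhs b) (nbhs_filter b) _ _).1 (Dc i b) th th0.
have [del del0 Hdel] := nbhs_enorm_ex Hn.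
have den1 : 0 < 2 * nv + 1 by rewrite ltr_wpDl // mulr_ge0.
exists (del / (2 * nv + 1)); first by rewrite divr_gt0.
move=> t t0 tt0.
have tdel : t * (2 * nv + 1) < del by rewrite -ltr_pdivlMr.
have key : forall k, (k <= d)%N ->
    f (b + t *: wv v k) - f b <= t * (dotp G (wv v k) + th * k%:R * nv).
  elim => [_|k IH kd].
    by rewrite wv0 scaler0 addr0 subrr dotp0r mulr0 mul0r addr0 mulr0.
  have kd' : (k < d)%N by [].
  have := IH (ltnW kd'); set ko := Ordinal kd'.
  have -> : k.+1 = ko.+1 by [].
  have -> : k = ko by [].
  rewrite wvS scalerDr addrA.
  set Q := b + t *: wv v ko => IHk.
  have [c cle E] := MVT_any (t * v 0 ko)
    (fun s => @partial_is_derive f Q ko s (fd ko _))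
    (@continuous_comp_aff f fc Q (evec ko)).
  rewrite /= scale0r addr0 in E.
  have vk : `|v 0 ko| <= nv := coord_le_enorm v ko.
  have Hxi : enorm (Q + c *: evec ko - b) < del.
    have -> : Q + c *: evec ko - b = t *: wv v ko + c *: evec ko.
      by apply/rowP => j; rewrite /Q !mxE; ring.
    apply: le_lt_trans (enormD _ _) _.
    rewrite !enormZ enorm_evec mulr1 (gtr0_norm t0).
    have := enorm_wv v ko; rewrite -/nv => hw.
    have : `|c| <= t * nv.
      by apply: le_trans cle _; rewrite normrM gtr0_norm // ler_wpM2l // ltW.
    move=> hc; have : t * enorm (wv v ko) <= t * nv by rewrite ler_wpM2l // ltW.
    lra.
  have Hk := Hdel _ Hxi ko.
  set Db := 'D_(evec ko) f b in Hk *; set Dx := 'D_(evec ko) f (Q + c *: evec ko) in Hk E *.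
  have H1 : Dx * (t * v 0 ko) <= Db * (t * v 0 ko) + th * (t * nv).
    have h2 : (Dx - Db) * (t * v 0 ko) <= `|Dx - Db| * `|t * v 0 ko|.
      by rewrite -normrM ler_norm.
    have h3 : `|Dx - Db| * `|t * v 0 ko| <= th * (t * nv).
      rewrite normrM (gtr0_norm t0); apply: ler_pM.
      - exact: normr_ge0.
      - by apply: mulr_ge0; [exact: ltW|exact: normr_ge0].
      - by rewrite distrC ltW.
      - by rewrite ler_wpM2l // ltW.
    lra.
  have HG : dotp G (wv v ko + v 0 ko *: evec ko) = dotp G (wv v ko) + v 0 ko * Db.
    by rewrite dotpDr dotpZr dotp_evec /G /grad mxE.
  have -> : (ko.+1%:R : R) = ko%:R + 1 by rewrite -addn1 natrD.
  rewrite HG scalerA -/Q.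
  lra.
have := key d (leqnn d); rewrite wvd -/gv => H.
have hneg : gv + th * d%:R * nv < 0.
  have e1 : th * (2 * (d%:R * nv + 1)) = - gv by rewrite /th divfK // gt_eqF.
  have : 0 <= th * d%:R * nv by rewrite mulr_ge0 // mulr_ge0 // ltW.
  lra.
have : t * (gv + th * d%:R * nv) < 0 by rewrite pmulr_rlt0.
lra.
Qed.

End Descent.

Section Ball.
Context {R : realType} {d : nat}.
Local Notation V := 'rV[R]_d.
Implicit Types u v w x y : V.

Lemma lipK_continuous (g : V -> R) K : 0 <= K ->
  (forall x y, g x - g y <= K * enorm (x - y)) -> continuous g.
Proof.
move=> K0 H x.
apply/(@cvgrPdist_lt _ _ _ (nbhs x) (nbhs_filter x)) => e e0.
have K1 : 0 < K + 1 by rewrite ltr_wpDl.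
have e1 : 0 < e / (K + 1) by rewrite divr_gt0.
apply: filterS (nbhs_enorm x e1) => y /= Hy.
have h1 := H x y; have h2 := H y x; rewrite enormB in h2.
rewrite enormB in Hy.
have h3 : K * enorm (x - y) <= (K + 1) * enorm (x - y).
  by rewrite ler_wpM2r ?enorm_ge0 // lerDl.
have h4 : (K + 1) * enorm (x - y) < e by rewrite mulrC -ltr_pdivlMr.
rewrite ltr_norml; apply/andP; split; lra.
Qed.

Lemma closed_ineq (g1 g2 : V -> R) : continuous g1 -> continuous g2 ->
  closed [set x | g1 x <= g2 x].
Proof.
move=> c1 c2.
have -> : [set x | g1 x <= g2 x] = (fun x => g2 x - g1 x) @^-1` [set r | 0 <= r].
  by apply/seteqP; split => x /=; rewrite subr_ge0.
apply: preimage_closed; last exact: closed_ge.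
by move=> x _; apply: continuousB; [exact: c2|exact: c1].
Qed.

Lemma bounded_enorm (E : set V) y L : (forall x, E x -> enorm (x - y) <= L) ->
  bounded_set E.
Proof.
move=> H; rewrite /bounded_near.
apply: filterS (nbhs_pinfty_ge (num_real (`|y| + L))) => M HM x Ex /=.
apply: le_trans HM; have := H x Ex => Hx.
have : `|x| <= `|y| + `|x - y| by rewrite -{1}(subrK y x) addrC ler_normD.
have := mxnorm_le_enorm (x - y); lra.
Qed.

Lemma alg_step (w n e : V) D h th eps :
  enorm n = 1 -> w = D *: n -> 0 < D -> 0 <= h -> enorm e <= th ->
  th = eps * D -> 0 <= eps <= 1 -> D <= enorm (w + e) ->
  D + (1 - eps) * h <= enorm (w + h *: n + e).
Proof.
move=> n1 wE D0 h0 eth thE /andP [e0 e1] Dle.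
have s0 : 0 <= D + (1 - eps) * h.
  by apply: addr_ge0; [exact: ltW | apply: mulr_ge0 => //; rewrite subr_ge0].
rewrite ge_enorm_sq //.
have -> : w + h *: n + e = (w + e) + h *: n by rewrite addrAC.
rewrite dotp_expand dotpZr !dotpZl dotpZr.
have nn : dotp n n = 1 by rewrite -enorm_sq n1 expr1n.
have un : dotp (w + e) n >= D - th.
  rewrite dotpDl wE dotpZl nn mulr1.
  have := CS_abs e n; rewrite n1 mulr1 => H.
  have H2 : - dotp e n <= `|dotp e n| by rewrite -normrN ler_norm.
  lra.
have uu : D ^+ 2 <= dotp (w + e) (w + e).
  by rewrite -ge_enorm_sq // ltW.
rewrite nn mulr1.
have hh : 0 <= h * h by rewrite mulr_ge0.
have : h * (D - th) <= h * dotp (w + e) n by rewrite ler_wpM2l.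
rewrite thE; nra.
Qed.

Lemma local_step (A : set V) rho x q eps hmax :
  closed A -> (forall z, distA A z < rho -> unique_nearest A z) ->
  A q -> enorm (x - q) = distA A x -> 0 < distA A x -> distA A x < rho ->
  0 < eps -> eps <= 1 -> 0 < hmax ->
  exists2 h, 0 < h <= hmax &
    distA A x + (1 - eps) * h <= distA A (x + h *: ((distA A x)^-1 *: (x - q))).
Proof.
move=> clA Hu Aq Eq D0 Drho eps0 eps1 hm0.
set D := distA A x in Eq D0 Drho *.
have uniq : forall a, A a -> enorm (x - a) = D -> a = q.
  have [q0 [[_ _] U]] := Hu x Drho.
  by move=> a Aa Ea; rewrite -(U a (conj Aa Ea)) (U q (conj Aq Eq)).
set th := eps * D.
have th0 : 0 < th by rewrite mulr_gt0.
have [g g0 Hg] : exists2 g, 0 < g &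
    forall a, A a -> enorm (a - x) < D + g -> enorm (a - q) < th.
  set K := A `&` [set a | enorm (a - x) <= D + 1] `&` [set a | th <= enorm (a - q)].
  have [K0|/set0P Kn0] := eqVneq K set0.
    exists 1 => // a Aa Ha; rewrite ltNge; apply/negP => Hth.
    have : K a by split; [split => //; exact: ltW|].
    by rewrite K0.
  have clK : closed K.
    apply: closedI; first apply: closedI => //.
      by apply: closed_ineq; [exact: enorm_sub_continuous|exact: cst_continuous].
    by apply: closed_ineq; [exact: cst_continuous|exact: enorm_sub_continuous].
  have cK : compact K.
    apply: bounded_closed_compact => //.
    by apply: (@bounded_enorm _ x (D + 1)) => a [[_ ?] _].
  have [a0 Ka0 Ha0] := compact_EVT_min Kn0 cK
    (continuous_subspaceT (@enorm_sub_continuous _ _ x)).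
  move: Ka0; rewrite inE => -[[Aa0 Ha0x] Ha0q].
  have Dle : D <= enorm (a0 - x) by rewrite enormB; exact: distA_le.
  have Dlt : D < enorm (a0 - x).
    rewrite lt_neqAle Dle andbT; apply/negP => /eqP E.
    have := uniq a0 Aa0; rewrite enormB -E => /(_ erefl) a0q.
    by move: Ha0q => /=; rewrite a0q subrr enorm0 leNgt th0.
  exists (Num.min (enorm (a0 - x) - D) 1).
    by rewrite lt_min subr_gt0 Dlt ltr01.
  move=> a Aa Ha; rewrite ltNge; apply/negP => Hth.
  have Ka : K a.
    split => //; split => //=; apply: ltW; apply: lt_le_trans Ha _.
    by rewrite lerD2l ge_min lexx orbT.
  have := Ha0 a (mem_set Ka).
  have : Num.min (enorm (a0 - x) - D) 1 <= enorm (a0 - x) - D by rewrite ge_min lexx.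
  move: Ha; lra.
set n := D^-1 *: (x - q).
have n1 : enorm n = 1.
  by rewrite /n enormZ gtr0_norm ?invr_gt0 // Eq mulVf // gt_eqF.
have wE : x - q = D *: n by rewrite /n scalerA mulfV ?gt_eqF // scale1r.
have rD : 0 < (rho - D) / 2 by rewrite divr_gt0 // subr_gt0.
set h := Num.min hmax (Num.min (g / 3) ((rho - D) / 2)).
have h0 : 0 < h by rewrite !lt_min hm0 rD divr_gt0.
have h1 : h <= hmax by rewrite ge_min lexx.
have h2 : h <= g / 3 by rewrite !ge_min lexx orbT.
have h3 : h <= (rho - D) / 2 by rewrite !ge_min lexx !orbT.
exists h; first by rewrite h0 h1.
set x' := x + h *: n.
have hn : enorm (h *: n) = h by rewrite enormZ n1 mulr1 gtr0_norm.
have xx' : x' - x = h *: n by rewrite /x' addrAC subrr add0r.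
have dx' : distA A x' <= D + h.
  by have := distA_lip A x' x; rewrite xx' hn.
have dx'r : distA A x' < rho by lra.
have [q' [[Aq' Eq'] _]] := Hu x' dx'r.
have Hq' : enorm (q' - x) < D + g.
  have := enorm_tri q' x' x; rewrite xx' hn (enormB q' x') Eq'; lra.
have eq' : enorm (q - q') < th by rewrite enormB; exact: Hg.
have Dq' : D <= enorm ((x - q) + (q - q')).
  by rewrite addrA subrK; exact: distA_le.
have := alg_step n1 wE D0 (ltW h0) (ltW eq') (erefl th) _ Dq'.
rewrite eps1 (ltW eps0) => /(_ isT).
have -> : x - q + h *: n + (q - q') = x' - q'.
  by apply/rowP => j; rewrite /x' !mxE; ring.
by rewrite Eq'.
Qed.

Lemma grow (A : set V) rho y L eps :
  closed A -> (forall z, distA A z < rho -> unique_nearest A z) ->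
  0 < distA A y -> 0 < L -> distA A y + L < rho -> 0 < eps -> eps < 1 ->
  exists2 xs, enorm (xs - y) <= L & distA A y + (1 - eps) * L <= distA A xs.
Proof.
move=> clA Hu t0 L0 tLr eps0 eps1.
set t := distA A y in t0 tLr *.
set E := [set x | enorm (x - y) <= L] `&`
         [set x | t + (1 - eps) * enorm (x - y) <= distA A x].
have Ey : E y by split => /=; rewrite subrr enorm0 ?(ltW L0) // mulr0 addr0.
have c1 : continuous (fun x => t + (1 - eps) * enorm (x - y)).
  apply: (@lipK_continuous _ (1 - eps)); first by rewrite subr_ge0 ltW.
  move=> x z; rewrite opprD addrACA subrr add0r -mulrBr.
  rewrite ler_wpM2l ?subr_ge0 ?(ltW eps1) //.
  have := enorm_tri (x - y) (z - y) 0; rewrite !subr0.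
  by rewrite (_ : x - y - (z - y) = x - z) ?opprB ?addrA ?subrK //; lra.
have clE : closed E.
  apply: closedI.
    by apply: closed_ineq; [exact: enorm_sub_continuous|exact: cst_continuous].
  by apply: closed_ineq => //; exact: distA_continuous.
have cE : compact E.
  apply: bounded_closed_compact => //.
  by apply: (@bounded_enorm _ y L) => x [].
have [xs Exs Hmax] := compact_EVT_max (ex_intro _ y Ey) cE
    (continuous_subspaceT (@distA_continuous _ _ A)).
move: Exs; rewrite inE => -[/= Exs1 Exs2].
have [Lle|Llt] := leP L (enorm (xs - y)).
  exists xs => //; apply: le_trans Exs2; rewrite lerD2l ler_wpM2l //.
  by rewrite subr_ge0 ltW.
exfalso.
set D := distA A xs in Exs2 Hmax.
have e0 : 0 <= (1 - eps) * enorm (xs - y) by rewrite mulr_ge0 ?enorm_ge0 // subr_ge0 ltW.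
have D0 : 0 < D by lra.
have DL : D < rho by have := distA_lip A xs y; rewrite -/D -/t; lra.
have [q [[Aq Eq] _]] := Hu xs DL.
have hm0 : 0 < L - enorm (xs - y) by rewrite subr_gt0.
have [h /andP [h0 hle] Hh] := local_step clA Hu Aq Eq D0 DL eps0 (ltW eps1) hm0.
set x' := xs + h *: (D^-1 *: (xs - q)) in Hh.
have hn : enorm (h *: (D^-1 *: (xs - q))) = h.
  by rewrite !enormZ Eq (gtr0_norm h0) gtr0_norm ?invr_gt0 // mulVf ?gt_eqF // mulr1.
have Hx'y : enorm (x' - y) <= enorm (xs - y) + h.
  have -> : x' - y = (xs - y) + h *: (D^-1 *: (xs - q)) by rewrite /x' addrAC.
  by apply: le_trans (enormD _ _) _; rewrite hn.
have Ex' : E x'.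
  split => /=; first lra.
  apply: le_trans Hh; rewrite -/D.
  have : (1 - eps) * enorm (x' - y) <= (1 - eps) * (enorm (xs - y) + h).
    by rewrite ler_wpM2l // subr_ge0 ltW.
  lra.
have := Hmax x' (mem_set Ex').
have : 0 < (1 - eps) * h by rewrite mulr_gt0 // subr_gt0.
lra.
Qed.

Lemma ball_at_boundary (X : set V) rho b :
  0 < rho -> (forall z, distA (Ccl X) z < rho -> unique_nearest (Ccl X) z) ->
  closure (interior X) = X -> X b -> ~ interior X b ->
  exists2 c, 0 < enorm (c - b) & forall a, Ccl X a -> enorm (c - b) <= enorm (c - a).
Proof.
move=> rho0 Hu cl Xb nib.
set A := Ccl X in Hu *.
have clA : closed A by exact: closed_closure.
have Ab : A b by exact: notint_Ccl.
have An0 : A !=set0 by exists b.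
set s := rho / 2.
have s0 : 0 < s by rewrite divr_gt0.
have srho : s < rho by rewrite /s; lra.
have approx : forall eta, 0 < eta -> eta <= s / 2 ->
    exists2 c, enorm (c - b) <= s + eta & s - eta <= distA A c.
  move=> eta eta0 etas.
  have [y [Iy Ny]] := dense_interior cl Xb (nbhs_enorm b eta0).
  move: Ny => /= Ny.
  have t0 : 0 < distA A y by exact: interior_distA.
  have tle : distA A y <= enorm (y - b) by exact: distA_le.
  set t := distA A y in t0 tle *.
  have L0 : 0 < s - t by lra.
  have tL : t + (s - t) < rho by lra.
  have eps0 : 0 < eta / s by rewrite divr_gt0.
  have eps1 : eta / s < 1 by rewrite ltr_pdivrMr // mul1r; lra.
  have [xs Hxs1 Hxs2] := grow clA Hu t0 L0 tL eps0 eps1.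
  exists xs.
    have := enorm_tri xs y b; lra.
  have e1 : eta / s * s = eta by rewrite divfK // gt_eqF.
  have : eta / s * (s - t) <= eta / s * s by rewrite ler_wpM2l ?ltW //; lra.
  lra.
set K := [set c | s / 2 <= distA A c] `&` [set c | enorm (c - b) <= 2 * s].
have s2 : 0 < s / 2 by rewrite divr_gt0.
have inK : forall eta, 0 < eta -> eta <= s / 2 ->
    exists2 c, K c & enorm (c - b) - distA A c <= 2 * eta.
  move=> eta eta0 etas; have [c H1 H2] := approx eta eta0 etas.
  exists c; last lra.
  by split => /=; lra.
have Kn0 : K !=set0 by have [c Kc _] := inK (s / 2) s2 (lexx _); exists c.
have clK : closed K.
  apply: closedI.
    by apply: closed_ineq => //; [exact: cst_continuous|exact: distA_continuous].
  by apply: closed_ineq; [exact: enorm_sub_continuous|exact: cst_continuous].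
have cK : compact K.
  apply: bounded_closed_compact => //.
  by apply: (@bounded_enorm _ b (2 * s)) => c [].
have cG : continuous (fun c : V => enorm (c - b) - distA A c).
  apply: (@lipK_continuous _ 2) => // c c'.
  have := distA_lip A c' c; have := enorm_tri c c' b; rewrite (enormB c' c).
  lra.
have [c0 Kc0 Hmin] := compact_EVT_min Kn0 cK (continuous_subspaceT cG).
move: Kc0; rewrite inE => -[/= Kc1 Kc2].
have G0 : enorm (c0 - b) - distA A c0 <= 0.
  rewrite leNgt; apply/negP => Gp.
  set G := enorm (c0 - b) - distA A c0 in Gp.
  have e0 : 0 < Num.min (s / 2) (G / 4) by rewrite lt_min s2 divr_gt0.
  have e1 : Num.min (s / 2) (G / 4) <= s / 2 by rewrite ge_min lexx.
  have [c Kc Hc] := inK _ e0 e1.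
  have := Hmin c (mem_set Kc).
  have : Num.min (s / 2) (G / 4) <= G / 4 by rewrite ge_min lexx orbT.
  rewrite -/G; lra.
exists c0.
  have := distA_le c0 Ab; lra.
move=> a Aa; have := distA_le c0 Aa; lra.
Qed.

End Ball.

Section Dens.
Context {R : realType} {d : nat}.
Local Notation V := 'rV[R]_d.
Implicit Types u v w x y : V.

Lemma enorm_le_mxnorm1 u : enorm u <= (d%:R + 1) * `|u|.
Proof.
apply: le_trans (enorm_le_mxnorm u) _.
by rewrite ler_wpM2r ?normr_ge0 // lerDl.
Qed.

Lemma tan_polar (A : set V) b c : A b ->
  (forall a, A a -> enorm (c - b) <= enorm (c - a)) ->
  forall w, tan_dirs A b w -> dotp (c - b) w <= 0.
Proof.
move=> Ab Hc w [xs [Hxs [cx cw]]].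
set u := c - b.
have key : forall n, dotp u ((enorm (xs n - b))^-1 *: (xs n - b)) <= enorm (xs n - b) / 2.
  move=> n; have [An xnb] := Hxs n.
  set z := xs n - b.
  have r0 : 0 < enorm z.
    rewrite lt_neqAle enorm_ge0 andbT; apply/negP => /eqP /esym /enorm_eq0 /eqP.
    by rewrite subr_eq0 (negbTE xnb).
  have := Hc _ An.
  have -> : c - xs n = u - z by rewrite /u /z opprB addrA subrK.
  rewrite enorm_le_sq (dotp_expandB u z) => H.
  have H2 : 2 * dotp u z <= enorm z ^+ 2 by rewrite enorm_sq; lra.
  rewrite dotpZr mulrC ler_pdivrMr //; rewrite expr2 in H2; lra.
rewrite leNgt; apply/negP => k0.
set k := dotp u w in k0.
have dp : 0 < (d%:R : R) + 1 by rewrite ltr_wpDl.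
have up : 0 < enorm u + 1 by rewrite ltr_wpDl ?enorm_ge0.
have e1 : 0 < k / (2 * ((enorm u + 1) * (d%:R + 1))).
  by rewrite divr_gt0 // mulr_gt0 // mulr_gt0.
have e2 : 0 < k / (d%:R + 1) by rewrite divr_gt0.
have H1 := @cvgr_dist_lt _ _ _ _ eventually_filter _ _ cw _ e1.
have H2 := @cvgr_dist_lt _ _ _ _ eventually_filter _ _ cx _ e2.
have [n [Hn1 Hn2]] := filter_ex (filterI H1 H2).
move: Hn1 Hn2 => /=.
set wn := (enorm (xs n - b))^-1 *: (xs n - b) => Hn1 Hn2.
have := key n; rewrite -/wn => Kn.
have r1 : enorm (xs n - b) < k.
  apply: le_lt_trans (enorm_le_mxnorm1 _) _.
  by rewrite -normrN opprB mulrC -ltr_pdivlMr.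
have r2 : `|dotp u wn - k| < k / 2.
  rewrite /k -dotpBr; apply: le_lt_trans (CS_abs _ _) _.
  have : enorm (wn - w) <= (d%:R + 1) * `|wn - w| by exact: enorm_le_mxnorm1.
  rewrite -normrN opprB => H3.
  have H4 : enorm u * enorm (wn - w) <= enorm u * ((d%:R + 1) * `|w - wn|).
    by rewrite ler_wpM2l ?enorm_ge0.
  have H5 : (d%:R + 1) * `|w - wn| < (d%:R + 1) * (k / (2 * ((enorm u + 1) * (d%:R + 1)))).
    by rewrite ltr_pM2l.
  have E : (d%:R + 1) * (k / (2 * ((enorm u + 1) * (d%:R + 1)))) = k / (2 * (enorm u + 1)).
    by field; rewrite !gt_eqF.
  rewrite E in H5.
  have H6 : enorm u * ((d%:R + 1) * `|w - wn|) <= enorm u * (k / (2 * (enorm u + 1))).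
    by rewrite ler_wpM2l ?enorm_ge0 // ltW.
  have H7 : enorm u * (k / (2 * (enorm u + 1))) < k / 2.
    have E2 : enorm u * (k / (2 * (enorm u + 1))) = k / 2 - k / (2 * (enorm u + 1)).
      by field; rewrite gt_eqF.
    rewrite E2; have : 0 < k / (2 * (enorm u + 1)) by rewrite divr_gt0 // mulr_gt0.
    lra.
  by apply: le_lt_trans H4 _; apply: le_lt_trans H6 H7.
move: r2; rewrite ltr_distl => /andP [r2a r2b].
lra.
Qed.

Lemma choose_v (g u w : V) : 0 < dotp g w -> dotp u w <= 0 -> 0 < enorm u ->
  exists v, dotp g v < 0 /\ 0 < dotp u v.
Proof.
move=> gw uw u0.
have U0 : 0 < dotp u u by rewrite -enorm_sq exprn_gt0.
have G0 : 0 < dotp g g.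
  rewrite lt_neqAle dotpp_ge0 andbT; apply/negP => /eqP /esym /dotpp_eq0 g0.
  by move: gw; rewrite g0 dotp0l ltxx.
set a := dotp g u; set G := dotp g g in G0 *; set U := dotp u u in U0 *.
have [a0|a0] := leP a 0.
  exists (u - g); rewrite !dotpBr -/a -/G -/U (dotpC u g) -/a; split; lra.
have CSs : a ^+ 2 < U * G.
  rewrite lt_neqAle; apply/andP; split; last first.
    by rewrite mulrC /a /G /U; exact: CS_sq.
  apply/negP => /eqP E.
  set z := U *: g - a *: u.
  have zz : dotp z z = 0.
    rewrite /z dotp_expandB !dotpZl !dotpZr -/a -/G -/U.
    have -> : U * (U * G) = U * (a ^+ 2) by rewrite E.
    rewrite expr2; ring.
  have z0 := dotpp_eq0 zz.
  have : dotp z w = 0 by rewrite z0 dotp0l.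
  rewrite /z dotpBl !dotpZl => /eqP; rewrite subr_eq0 => /eqP Ez.
  have : 0 < U * dotp g w by rewrite mulr_gt0.
  have : a * dotp u w <= 0 by rewrite mulr_ge0_le0 // ltW.
  lra.
set l := (a / G + U / a) / 2.
exists (u - l *: g); rewrite !dotpBr !dotpZr (dotpC u g) -/a -/G -/U.
have e1 : a - l * G = (a ^+ 2 - U * G) / (2 * a).
  by rewrite /l; field; rewrite !gt_eqF.
have e2 : U - l * a = (U * G - a ^+ 2) / (2 * G).
  by rewrite /l; field; rewrite !gt_eqF.
rewrite e1 e2; split.
  by rewrite pmulr_llt0 ?invr_gt0 ?mulr_gt0 // subr_lt0.
by rewrite divr_gt0 ?mulr_gt0 // subr_gt0.
Qed.

Lemma density (X : set V) (f : V -> R) c rho b eps :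
  0 < rho -> (forall z, distA (Ccl X) z < rho -> unique_nearest (Ccl X) z) ->
  Ccl X !=set0 -> closure (interior X) = X ->
  continuous f -> (forall i x, derivable f x (evec i)) ->
  (forall i, continuous ('D_(evec i) f)) ->
  regular_value X f c -> X b -> f b <= c -> 0 < eps ->
  exists y, [/\ enorm (y - b) < eps, 0 < distA (Ccl X) y & f y < c].
Proof.
move=> rho0 Hu An0 cl fc fd Dc reg Xb fbc eps0.
have [lt|ge] := ltP (f b) c.
  have cb : 0 < c - f b by rewrite subr_gt0.
  have Nb : nbhs b [set y | enorm (y - b) < eps /\ f y < c].
    apply: filterS (filterI (nbhs_enorm b eps0) (cvgr_dist_lt _ _ (fc b) _ cb)).
    move=> y [/= H1 H2]; split => //.
    by move: H2; rewrite ltr_distl => /andP [? _]; lra.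
  have [y [Iy [Ny1 Ny2]]] := dense_interior cl Xb Nb.
  by exists y; split => //; exact: interior_distA.
have fbe : f b = c by apply/eqP; rewrite eq_le fbc ge.
have nc := reg b Xb fbe.
set g := grad f b.
have [ib|nib] := pselect (interior X b).
  have g0 : g != 0.
    apply/negP => /eqP g0; apply: nc; split => //.
    rewrite /NorX asboolT //; exists 0 => //; by rewrite oppr0 -/g g0.
  set v := - g.
  have gv : dotp g v < 0.
    rewrite /v dotpNr oppr_lt0 lt_neqAle dotpp_ge0 andbT eq_sym.
    by apply/negP => /eqP /dotpp_eq0 /eqP; apply/negP.
  have [t0 t00 Ht0] := descent fc fd Dc gv.
  have [d1 d10 Hd1] : exists2 d1, 0 < d1 & forall y, enorm (y - b) < d1 -> interior X y.
    apply: nbhs_enorm_ex; apply: open_nbhs_nbhs; split => //; exact: open_interior.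
  set m := Num.min eps d1.
  have m0 : 0 < m by rewrite lt_min eps0 d10.
  have nv0 := enorm_ge0 v.
  have nv1 : 0 < enorm v + 1 by rewrite ltr_wpDl.
  set t := Num.min (t0 / 2) (m / (enorm v + 1)).
  have t0' : 0 < t by rewrite lt_min !divr_gt0.
  have tle1 : t <= t0 / 2 by rewrite ge_min lexx.
  have tle2 : t <= m / (enorm v + 1) by rewrite ge_min lexx orbT.
  have tt0 : t < t0 by lra.
  have meps : m <= eps by rewrite ge_min lexx.
  have md1 : m <= d1 by rewrite ge_min lexx orbT.
  set y := b + t *: v.
  have ty : enorm (y - b) = t * enorm v.
    by rewrite /y addrAC subrr add0r enormZ gtr0_norm.
  have tm : t * enorm v < m.
    have E : m / (enorm v + 1) * enorm v = m - m / (enorm v + 1).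
      by field; rewrite gt_eqF.
    have : t * enorm v <= m / (enorm v + 1) * enorm v by rewrite ler_wpM2r.
    have : 0 < m / (enorm v + 1) by rewrite divr_gt0.
    lra.
  exists y; split.
  - by rewrite ty; lra.
  - by apply: interior_distA => //; apply: Hd1; rewrite ty; lra.
  - by rewrite -fbe; exact: Ht0.
have [c0 c0pos Hc0] := ball_at_boundary rho0 Hu cl Xb nib.
have Ab : Ccl X b by exact: notint_Ccl.
have [w [Tw gw]] : exists w, tan_dirs (Ccl X) b w /\ 0 < dotp g w.
  apply: contrapT => H; apply: nc; split => //.
  rewrite /NorX asboolF //; exists (- g); last by rewrite opprK.
  exists g => //.
  move=> t [->|[l [w' [l0 [Tw' ->]]]]]; first by rewrite dotp0r.
  rewrite dotpZr; apply: mulr_ge0_le0 => //.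
  by rewrite leNgt; apply/negP => h; apply: H; exists w'.
have uw := tan_polar Ab Hc0 Tw.
have [v [gv uv]] := choose_v gw uw c0pos.
set u := c0 - b in uw uv c0pos Hc0.
have [t0 t00 Ht0] := descent fc fd Dc gv.
have nv0 := enorm_ge0 v.
have nv1 : 0 < enorm v + 1 by rewrite ltr_wpDl.
have vv1 : 0 < dotp v v + 1 by rewrite ltr_wpDl // dotpp_ge0.
set t := Num.min (t0 / 2) (Num.min (eps / (enorm v + 1)) (dotp u v / (dotp v v + 1))).
have t0' : 0 < t by rewrite !lt_min !divr_gt0.
have tle1 : t <= t0 / 2 by rewrite ge_min lexx.
have tle2 : t <= eps / (enorm v + 1) by rewrite !ge_min lexx !orbT.
have tle3 : t <= dotp u v / (dotp v v + 1) by rewrite !ge_min lexx !orbT.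
have tt0 : t < t0 by lra.
set y := b + t *: v.
have ty : enorm (y - b) = t * enorm v.
  by rewrite /y addrAC subrr add0r enormZ gtr0_norm.
have tm : t * enorm v < eps.
  have E : eps / (enorm v + 1) * enorm v = eps - eps / (enorm v + 1).
    by field; rewrite gt_eqF.
  have : t * enorm v <= eps / (enorm v + 1) * enorm v by rewrite ler_wpM2r.
  have : 0 < eps / (enorm v + 1) by rewrite divr_gt0.
  lra.
have Hsm : enorm (u - t *: v) < enorm u.
  rewrite ltNge enorm_le_sq -ltNge dotp_expandB dotpZr !dotpZl dotpZr.
  have h1 : t * (dotp v v + 1) <= dotp u v by rewrite -ler_pdivlMr.
  have h2 : t * (t * dotp v v) <= t * (dotp u v) by rewrite ler_wpM2l ?ltW //; nra.
  have h3 : 0 < t * dotp u v by rewrite mulr_gt0.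
  lra.
exists y; split.
- by rewrite ty.
- apply: lt_le_trans (_ : 0 < enorm u - enorm (u - t *: v)) _; first lra.
  apply: distA_lb => // a Aa.
  have := enorm_tri c0 y a; have := Hc0 a Aa.
  have -> : c0 - y = u - t *: v by rewrite /u /y opprD addrA.
  lra.
- by rewrite -fbe; exact: Ht0.
Qed.

End Dens.
Section Main.
Context {R : realType} {d : nat}.
Local Notation V := 'rV[R]_d.
Implicit Types u v w x y : V.

Lemma dir1 (X : set V) (f : V -> R) c (eta : V -> V) eps :
  compact X -> continuous f -> (forall x, enorm (eta x) <= 1) -> 0 < eps ->
  \forall r \near 0^'+, X `<=` (fun x =>
     (inner_parallel X r `&` [set x | f (x + r *: eta x) <= c]) x ->
     enlarge (X `&` [set x | f x <= c]) eps x).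
Proof.
move=> cX fc eta1 eps0.
have NC := (compact_near_coveringP X).1 cX.
apply: (NC R (0^'+) (fun r x => (inner_parallel X r `&` [set x | f (x + r *: eta x) <= c]) x ->
     enlarge (X `&` [set x | f x <= c]) eps x)) => // x Xx.
have [fx|fx] := leP (f x) c.
  exists ([set x' | enorm (x' - x) < eps], setT).
    by split => /=; [exact: nbhs_enorm | exact: filterT].
  move=> [x' r] [/= H1 _] _; exists x => //; exact: ltW.
have cf : 0 < f x - c by rewrite subr_gt0.
have [del del0 Hdel] := nbhs_enorm_ex (cvgr_dist_lt _ _ (fc x) _ cf).
have del2 : 0 < del / 2 by rewrite divr_gt0.
exists ([set x' | enorm (x' - x) < del / 2], [set r | 0 < r /\ r < del / 2]).
  split => /=; first exact: nbhs_enorm.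
  exact: filterI (nbhs_right_gt 0) (nbhs_right_lt del2).
move=> [x' r] [/= H1 [r0 r1]] [_ /= Hr].
exfalso.
have Hz : enorm (x' + r *: eta x' - x) < del.
  rewrite addrAC; apply: le_lt_trans (enormD _ _) _.
  rewrite enormZ gtr0_norm //.
  have : r * enorm (eta x') <= r by rewrite -[leRHS]mulr1 ler_wpM2l // ltW.
  lra.
have := Hdel _ Hz; rewrite ltr_distl => /andP [_ h].
lra.
Qed.

Lemma dir2 (X : set V) (f : V -> R) c (eta : V -> V) rho eps :
  compact X -> 0 < rho ->
  (forall z, distA (Ccl X) z < rho -> unique_nearest (Ccl X) z) ->
  Ccl X !=set0 -> closure (interior X) = X ->
  continuous f -> (forall i x, derivable f x (evec i)) ->
  (forall i, continuous ('D_(evec i) f)) ->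
  regular_value X f c -> (forall x, enorm (eta x) <= 1) -> 0 < eps ->
  \forall r \near 0^'+, (X `&` [set x | f x <= c]) `<=`
     enlarge (inner_parallel X r `&` [set x | f (x + r *: eta x) <= c]) eps.
Proof.
move=> cX rho0 Hu An0 cl fc fd Dc reg eta1 eps0.
have cB : compact (X `&` [set x | f x <= c]).
  apply: compact_closedI => //.
  by apply: closed_ineq => //; exact: cst_continuous.
have NC := (compact_near_coveringP _).1 cB.
apply: (NC R (0^'+) (fun r x => enlarge (inner_parallel X r `&`
   [set x | f (x + r *: eta x) <= c]) eps x)) => // x [Xx fx].
have e2 : 0 < eps / 2 by rewrite divr_gt0.
have [y [Hy1 Hy2 Hy3]] := density rho0 Hu An0 cl fc fd Dc reg Xx fx e2.
have cf : 0 < c - f y by rewrite subr_gt0.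
have [del del0 Hdel] := nbhs_enorm_ex (cvgr_dist_lt _ _ (fc y) _ cf).
exists ([set x' | enorm (x' - x) < eps / 2],
        [set r | 0 < r /\ (r < distA (Ccl X) y /\ r < del)]).
  split => /=; first exact: nbhs_enorm.
  apply: filterI; first exact: nbhs_right_gt.
  by apply: filterI; exact: nbhs_right_lt.
move=> [x' r] [/= H1 [r0 [r1 r2]]].
exists y.
  split; first by rewrite /inner_parallel /=; exact: ltW.
  have Hz : enorm (y + r *: eta y - y) < del.
    rewrite addrAC subrr add0r enormZ gtr0_norm //.
    have : r * enorm (eta y) <= r by rewrite -[leRHS]mulr1 ler_wpM2l // ltW.
    lra.
  have := Hdel _ Hz; rewrite ltr_distl => /andP [h _] /=.
  lra.
have := enorm_tri x' x y; rewrite (enormB x y); lra.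
Qed.

End Main.

Unset Implicit Arguments. Set Strict Implicit. Set Printing Implicit Defensive.

Theorem mainTheorem11 (R : realType) (d : nat) (X : set 'rV[R]_d)
  (f : 'rV[R]_d -> R) (c : R) (eta : 'rV[R]_d -> 'rV[R]_d) :
  complementary_regular X ->
  Ck 2 f ->
  regular_value X f c ->
  smooth eta ->
  (forall x, enorm (eta x) <= 1) ->
  (fun r : R => hausdorff
      (inner_parallel X r `&` [set x | f (x + r *: eta x) <= c])
      (X `&` [set x | f x <= c])) @ 0^'+ --> 0%:E.
Proof.
move=> [cX cl _ rpos] [fc fD] reg _ eta1.
have fd : forall i x, derivable f x (evec i) by move=> i x; exact: (fD i).1.
have Dc : forall i, continuous ('D_(evec i) f) by move=> i; exact: (fD i).2.1.
have [_ [t [t0 Ht] <-] tpos] := ereal_sup_gt rpos.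
rewrite lte_fin in tpos.
have An0 : Ccl X !=set0.
  apply/set0P/negP => /eqP E.
  by have := Ht 0; rewrite E distA_set0 => /(_ tpos) [a [[] ]].
pose hh := fun r : R => hausdorff
      (inner_parallel X r `&` [set x | f (x + r *: eta x) <= c])
      (X `&` [set x | f x <= c]).
have Hb : forall e, 0 < e -> \forall r \near 0^'+, (0 <= hh r)%E /\ (hh r <= e%:E)%E.
  move=> e e0.
  have D1 := dir1 c (eta:=eta) cX fc eta1 e0.
  have D2 := dir2 (c:=c) (eta:=eta) cX tpos Ht An0 cl fc fd Dc reg eta1 e0.
  apply: filterS (filterI (filterI D1 D2) (nbhs_right_gt 0)) => r [[H1 H2] r0].
  split.
    apply: le_ereal_inf_tmp => _ [e' [e'0 _] <-].
    by rewrite lee_fin.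
  apply: ereal_inf_lbound; exists e => //; split; first exact: ltW.
  split => // x Ax; apply: H1 => //.
  case: Ax => /= Hd _; apply/not_notP => nX.
  have : Ccl X x by apply: subset_closure.
  move=> /(distA_le x); rewrite subrr enorm0 => h.
  have := le_trans Hd h; rewrite leNgt r0.
  by [].
rewrite -/hh; apply/fine_cvgP; split.
  apply: filterS (Hb 1 ltr01) => r [h0 h1].
  by rewrite ge0_fin_numE // (le_lt_trans h1) // ltry.
apply/cvgrPdist_le => e e0.
apply: filterS (Hb e e0) => r [h0 h1] /=.
rewrite sub0r normrN ger0_norm ?fine_ge0 //.
by rewrite -lee_fin fineK // ge0_fin_numE // (le_lt_trans h1) // ltry.
Qed.
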